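(* Let $\phi:K\to L$ be a continuous surjection between compact Hausdorff spaces, and assume $\phi$ admits a regular averaging operator, i.e., a bounded linear operator $P:C(K)\to C(L)$ with $P(f\circ\phi)=f$ for all $f\in C(L)$ and $\|P\|\le1$. If $K$ has the extension property (resp. the regular extension property), then $L$ has the extension property (resp. the regular extension property).
   Context: $C(K)$ is the Banach space of real-valued continuous functions on $K$ with the supremum norm and $\mathbf 1_K$ its unit. For a closed $F\subseteq K$, an extension operator for $F$ in $K$ is a bounded linear map $E:C(F)\to C(K)$ with $E(f)|_F=f$ for all $f\in C(F)$; it is regular if $\|E\|\le1$ and $E(\mathbf 1_F)=\mathbf 1_K$. $K$ has the (regular) extension property if every nonempty closed subset of $K$ admits a (regular) extension operator in $K$. *)

(* Defs.v *)
From HB Require Import structures.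
From mathcomp Require Import all_boot all_order all_algebra.
From mathcomp Require Import all_classical all_reals all_analysis.
Set Implicit Arguments. Unset Strict Implicit. Unset Printing Implicit Defensive.
Import Order.TTheory GRing.Theory Num.Theory.
Import numFieldNormedType.Exports.
Local Open Scope classical_set_scope.
Local Open Scope ring_scope.

(* C(X) is represented by the continuous functions X -> R; a bounded linear
   operator C(X) -> C(Y) is a map (X -> R) -> (Y -> R) sending continuous
   functions to continuous functions, linear and bounded on C(X) (its values
   on non-continuous functions are irrelevant). *)

Definition sup_norm (R : realType) (X : Type) (f : X -> R) : R :=
  sup [set `|f x| | x in [set: X]].

Definition bounded_linear_op (R : realType) (X Y : topologicalType)
    (T : (X -> R) -> (Y -> R)) : Prop :=
  [/\ (forall f, continuous f -> continuous (T f)),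
      (forall (a : R) (f g : X -> R), continuous f -> continuous g ->
          T (fun x => a * f x + g x) = (fun y => a * T f y + T g y)) &
      exists M : R, forall f, continuous f -> sup_norm (T f) <= M * sup_norm f].

Definition extension_operator (R : realType) (K : topologicalType) (F : set K)
    (E : (set_type F -> R) -> (K -> R)) : Prop :=
  bounded_linear_op E /\
  (forall f : set_type F -> R, continuous f ->
     forall x : set_type F, E f (set_val x) = f x).

Definition regular_extension_operator (R : realType) (K : topologicalType)
    (F : set K) (E : (set_type F -> R) -> (K -> R)) : Prop :=
  [/\ extension_operator E,
      (forall f : set_type F -> R, continuous f -> sup_norm (E f) <= sup_norm f) &
      E (fun _ => 1) = (fun _ => 1)].

Definition extension_property (R : realType) (K : topologicalType) : Prop :=
  forall F : set K, closed F -> F !=set0 ->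
    exists E : (set_type F -> R) -> (K -> R), extension_operator E.

Definition regular_extension_property (R : realType) (K : topologicalType) : Prop :=
  forall F : set K, closed F -> F !=set0 ->
    exists E : (set_type F -> R) -> (K -> R), regular_extension_operator E.

Definition regular_averaging_operator (R : realType) (K L : topologicalType)
    (phi : K -> L) (P : (K -> R) -> (L -> R)) : Prop :=
  [/\ bounded_linear_op P,
      (forall f : L -> R, continuous f -> P (f \o phi) = f) &
      (forall g : K -> R, continuous g -> sup_norm (P g) <= sup_norm g)].

(* Main.v *)
Require Import Defs.
From HB Require Import structures.
From mathcomp Require Import all_boot all_order all_algebra.
From mathcomp Require Import all_classical all_reals all_analysis.
Import Order.TTheory GRing.Theory Num.Theory.
Import numFieldNormedType.Exports.
Local Open Scope classical_set_scope.
Local Open Scope ring_scope.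
From mathcomp Require Import lra.
Set Implicit Arguments. Unset Strict Implicit.
Section H.
Context {R : realType}.

Lemma sup_norm_ge0 (X : Type) (f : X -> R) : 0 <= sup_norm f.
Proof.
rewrite /sup_norm; have [hs|hs] := pselect (has_sup [set `|f x| | x in [set: X]]).
  case: (hs) => -[e [x _ _]] _.
  apply: (le_trans (normr_ge0 (f x))); apply: ub_le_sup; first by case: hs.
  by exists x.
by rewrite sup_out.
Qed.

Lemma bnd_cont (X : topologicalType) (g : X -> R) :
  compact [set: X] -> continuous g -> exists M, forall x, `|g x| <= M.
Proof.
move=> cX cg.
have : compact (g @` [set: X]).
  by apply: continuous_compact => //; exact: continuous_subspaceT.
move=> /compact_bounded [M [Mr HM]].
exists (`|M| + 1) => x; apply: (HM (`|M| + 1)).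
  by apply: (le_lt_trans (real_ler_norm Mr)); rewrite ltrDl.
by exists x.
Qed.

Lemma le_sup_norm (X : topologicalType) (g : X -> R) :
  compact [set: X] -> continuous g -> forall x, `|g x| <= sup_norm g.
Proof.
move=> cX cg x; have [M HM] := bnd_cont cX cg.
apply: ub_le_sup; last by exists x.
by exists M => _ [y _ <-].
Qed.

Lemma sup_norm_le (X : Type) (g : X -> R) c :
  X -> (forall x, `|g x| <= c) -> sup_norm g <= c.
Proof.
move=> x0 H; apply: ge_sup; first by exists `|g x0|, x0.
by move=> _ [y _ <-].
Qed.

End H.

Lemma cont_lin {R : realType} (T : topologicalType) (a : R) (f g : T -> R) :
  continuous f -> continuous g -> continuous (fun x => a * f x + g x).
Proof.
move=> cf cg x.
have h1 : {for x, continuous (fun x => a * f x)}.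
  exact: (@continuousM _ _ (fun=> a) f x (@cst_continuous _ _ a x) (cf x)).
exact: (@continuousD _ _ _ (fun x => a * f x) g x h1 (cg x)).
Qed.
Section P.
Context {R : realType} {K L : topologicalType} (phi : K -> L)
  (P : (K -> R) -> (L -> R)).
Hypothesis cK : compact [set: K].
Hypothesis cL : compact [set: L].
Hypothesis hL : hausdorff_space L.
Hypothesis cphi : continuous phi.
Hypothesis x0 : K.
Hypothesis HP : regular_averaging_operator phi P.

Lemma P_cst (c : R) : P (fun _ => c) = (fun _ => c).
Proof.
case: HP => _ Hphi _; exact (Hphi (fun _ => c) (@cst_continuous _ _ c)).
Qed.

Lemma P_pos (g : K -> R) : continuous g -> (forall x, 0 <= g x) ->
  forall y, 0 <= P g y.
Proof.
move=> cg g0 y; case: HP => -[Pc Plin _] _ Pn.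
have [M HM] := bnd_cont cK cg.
set s := `|M| + 1.
have s0 : 0 < s by rewrite /s ltr_pwDr.
pose g' := fun x => (2 / s) * g x + (fun _ => -1) x.
have cg' : continuous g'.
  by apply: cont_lin => //; exact: cst_continuous.
have Pg' : P g' = fun y => (2 / s) * P g y + (-1).
  by rewrite /g' Plin //; [rewrite P_cst|exact: cst_continuous].
have le1 : sup_norm (P g') <= 1.
  apply: (le_trans (Pn _ cg')); apply: sup_norm_le => // x.
  rewrite /g' /=; have := HM x; rewrite ger0_norm // => gM.
  have gs : g x <= s by rewrite /s (le_trans gM)// (le_trans (ler_norm M))// lerDl.
  have t0 : 0 <= g x / s by rewrite divr_ge0 // ltW.
  have t1 : g x / s <= 1 by rewrite ler_pdivrMr // mul1r.
  have -> : 2 / s * g x = 2 * (g x / s) by rewrite mulrA mulrAC.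
  rewrite ler_norml; apply/andP; split; lra.
have := le_trans (le_sup_norm cL (Pc _ cg') y) le1.
rewrite Pg' ler_norml => /andP [+ _].
rewrite lerDr => H2; move: H2.
by rewrite pmulr_rge0 // divr_gt0.
Qed.


Lemma P_mono (g u : K -> R) : continuous g -> continuous u ->
  (forall x, g x <= u x) -> forall y, P g y <= P u y.
Proof.
move=> cg cu gu y; case: HP => -[Pc Plin _] _ _.
have := P_pos (cont_lin (a:=-1) cg cu) _ y.
rewrite Plin // mulN1r addrC subr_ge0; apply => x.
by rewrite mulN1r addrC subr_ge0.
Qed.

Lemma P_local (G : K -> R) (c : R) (y : L) : continuous G ->
  (forall x, phi x = y -> G x = c) -> P G y = c.
Proof.
move=> cG Gc; case: HP => -[Pc Plin _] Pphi _.
have [B0 HB0] := bnd_cont cK (cont_lin (a:=1) cG (@cst_continuous _ _ (- c))).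
have B00 : 0 <= B0 by exact: le_trans (HB0 x0).
suff H : forall e, 0 < e -> `|P G y - c| <= e.
  apply/eqP; rewrite -subr_eq0 -normr_le0; apply/ler_addgt0Pr => e e0.
  by rewrite add0r; exact: H.
move=> e e0.
pose C := [set x | e <= `|1 * G x + - c|].
have clC : closed C.
  apply: (@preimage_closed _ _ (fun x => `|1 * G x + - c|) [set r | e <= r]).
    move=> x _; apply: (@continuous_comp _ _ _ (fun x => 1 * G x + - c) Num.norm); last exact: norm_continuous.
    exact: (cont_lin (a:=1) cG (@cst_continuous _ _ (- c))) x.
  exact: closed_ge.
have cC : compact (phi @` C).
  apply: continuous_compact; first exact: continuous_subspaceT.
  exact: subclosed_compact clC cK _.
have clB : closed (phi @` C) by exact: compact_closed.
have nBy : ~ (phi @` C) y.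
  move=> [x Cx pxy]; move: Cx; rewrite /C /= Gc // mul1r subrr normr0.
  by apply/negP; rewrite -ltNge.
have := @normal_completely_regular R L (compact_normal hL cL)
   (hausdorff_accessible hL) y _ clB nBy.
move=> /(@uniform_separatorP L R) [v [cv v01 v0 v1]].
have vy : v y = 0 by apply: v0; exists y.
have vge0 : forall z, 0 <= v z.
  move=> z; have : `[0, 1]%classic (v z) by apply: v01; exists z.
  by rewrite /= in_itv /= => /andP [].
have key : forall x, `|G x - c| <= e + B0 * v (phi x).
  move=> x; have [Cx|nCx] := pselect (C x).
    have -> : v (phi x) = 1 by apply: v1; exists (phi x) => //; exists x.
    by have := HB0 x; rewrite mul1r mulr1; lra.
  have := mulr_ge0 B00 (vge0 (phi x)).
  by move: nCx; rewrite /C /= mul1r => /negP; rewrite -ltNge => h; lra.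
pose u1 := fun x => B0 * (v (phi x)) + (c + e).
pose u2 := fun x => (- B0) * (v (phi x)) + (c - e).
have cvphi : continuous (fun x => v (phi x)).
 by move=> x; apply: continuous_comp; [exact: cphi|exact: cv].
have Pu1 : P u1 = fun z => B0 * v z + (c + e).
  exact (Pphi (fun z => B0 * v z + (c + e)) (cont_lin (a:=B0) cv (@cst_continuous _ _ (c + e)))).
have Pu2 : P u2 = fun z => (- B0) * v z + (c - e).
  exact (Pphi (fun z => (- B0) * v z + (c - e)) (cont_lin (a:=-B0) cv (@cst_continuous _ _ (c - e)))).
have h1 := P_mono cG (cont_lin (a:=B0) cvphi (@cst_continuous _ _ (c + e))) _ y.
have h2 := P_mono (cont_lin (a:=-B0) cvphi (@cst_continuous _ _ (c - e))) cG _ y.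
rewrite -/u1 Pu1 vy mulr0 add0r in h1.
rewrite -/u2 Pu2 vy mulr0 add0r in h2.
have : P G y <= c + e.
  apply: h1 => x; have := key x; rewrite ler_norml => /andP [_].
  rewrite /u1 /=; lra.
have : c - e <= P G y.
  apply: h2 => x; have := key x; rewrite ler_norml => /andP [+ _].
  rewrite /u2 /=; lra.
rewrite ler_norml; lra.
Qed.

End P.
Section M.
Context {R : realType} {K L : topologicalType} (phi : K -> L)
  (P : (K -> R) -> (L -> R)).
Hypothesis cK : compact [set: K].
Hypothesis cL : compact [set: L].
Hypothesis hL : hausdorff_space L.
Hypothesis cphi : continuous phi.
Hypothesis sphi : forall y : L, exists x : K, phi x = y.
Hypothesis HP : regular_averaging_operator phi P.
Variable F : set L.

Definition F' : set K := phi @^-1` F.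

Definition q (x : set_type F') : set_type F :=
  @exist L (fun z => z \in F) (phi (sval x)) (mem_set (set_valP x)).

Lemma q_cont : continuous q.
Proof.
apply: (@continuous_comp_initial _ _ L set_val q).
have -> : set_val \o q = phi \o (@set_val K F') by [].
move=> x; apply: continuous_comp; last exact: cphi.
exact: initial_continuous.
Qed.

Lemma q_surj (z : set_type F) : exists x, q x = z.
Proof.
have [x px] := sphi (sval z).
have Fx : x \in F'.
  by apply: mem_set; rewrite /F' /= px; exact: set_valP.
exists (exist _ x Fx); apply: val_inj => /=; exact: px.
Qed.

Lemma sup_norm_q (f : set_type F -> R) : sup_norm (f \o q) = sup_norm f.
Proof.
rewrite /sup_norm; congr sup; apply/seteqP; split => r [x _ <-].
  by exists (q x).
by have [x' <-] := q_surj x; exists x'.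
Qed.


Definition Eop (E' : (set_type F' -> R) -> (K -> R)) :
  (set_type F -> R) -> (L -> R) := fun f => P (E' (f \o q)).

Lemma Eop_ext (E' : (set_type F' -> R) -> (K -> R)) :
  F !=set0 -> extension_operator E' -> extension_operator (Eop E').
Proof.
move=> [y0 Fy0] [[Ec Elin [M HM]] Eext].
have [x0 _] := sphi y0.
have HP' := HP; case: HP' => -[Pc Plin _] Pphi Pn.
have cfq : forall f : set_type F -> R, continuous f -> continuous (f \o q).
  move=> f cf x; apply: continuous_comp; [exact: q_cont|exact: cf].
split; first split.
- by move=> f cf; apply: Pc; apply: Ec; exact: cfq.
- move=> a f g cf cg; rewrite /Eop.
  have -> : (fun x => a * f x + g x) \o q = (fun x => a * (f \o q) x + (g \o q) x) by [].
  rewrite Elin; [|exact: cfq cf|exact: cfq cg].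
  by apply: Plin; apply: Ec; apply: cfq.
- exists M => f cf; rewrite /Eop.
  apply: (le_trans (Pn _ (Ec _ (cfq _ cf)))).
  by rewrite -(sup_norm_q f); exact: HM (cfq _ cf).
- move=> f cf z; rewrite /Eop.
  apply: (P_local cK cL hL cphi x0 HP (Ec _ (cfq _ cf))) => x pxz.
  have Fx : x \in F'.
    by apply: mem_set; rewrite /F' /= pxz; exact: set_valP.
  have -> : x = set_val (exist _ x Fx) by [].
  rewrite (Eext _ (cfq _ cf)) /=; congr f; apply: val_inj => /=; exact: pxz.
Qed.

Lemma Eop_reg (E' : (set_type F' -> R) -> (K -> R)) :
  F !=set0 -> regular_extension_operator E' -> regular_extension_operator (Eop E').
Proof.
move=> F0 [Eex Enorm E1]; split.
- exact: Eop_ext.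
- have HP' := HP; case: HP' => -[Pc Plin _] Pphi Pn.
  case: Eex => -[Ec _ _] _ f cf.
  have cfq : continuous (f \o q).
    move=> x; apply: continuous_comp; [exact: q_cont|exact: cf].
  apply: (le_trans (Pn _ (Ec _ cfq))).
  by rewrite -(sup_norm_q f); exact: Enorm.
- rewrite /Eop.
  have -> : (fun _ : set_type F => (1:R)) \o q = (fun _ => 1) by [].
  by rewrite E1 (P_cst HP).
Qed.

End M.

Unset Implicit Arguments.

Theorem proposition3p5 (R : realType) (K L : topologicalType) (phi : K -> L) :
  hausdorff_space K -> compact [set: K] ->
  hausdorff_space L -> compact [set: L] ->
  continuous phi -> (forall y : L, exists x : K, phi x = y) ->
  (exists P : (K -> R) -> (L -> R), regular_averaging_operator phi P) ->
  (extension_property R K -> extension_property R L) /\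
  (regular_extension_property R K -> regular_extension_property R L).
Proof.
move=> hK cK hL cL cphi sphi [P HP].
have clF' : forall F : set L, closed F -> closed (F' phi F).
  by move=> F clF; apply: preimage_closed => // x _; exact: cphi.
have nF' : forall F : set L, F !=set0 -> (F' phi F) !=set0.
  by move=> F [y Fy]; have [x px] := sphi y; exists x; rewrite /F' /= px.
split.
- move=> EK F clF F0; have [E' HE'] := EK _ (clF' F clF) (nF' F F0).
  by exists (Eop P E'); exact: (Eop_ext cK cL hL cphi sphi HP F0 HE').
- move=> EK F clF F0; have [E' HE'] := EK _ (clF' F clF) (nF' F F0).
  by exists (Eop P E'); exact: (Eop_reg cK cL hL cphi sphi HP F0 HE').
Qed.
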